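(* Let $X\in\mathbb{R}^{n\times p}$ with columns $\mathbf x_1,\dots,\mathbf x_p$, let $\mathbf y\in\mathbb{R}^n$, $\mathbf y\neq\mathbf 0$, let $\|X^T\mathbf y\|_\infty\ge\lambda_1>\lambda_2>0$, and fix $j$ with $\mathbf x_j\ne\mathbf 0$. Define $$\Omega=\Big\{\boldsymbol\theta\in\mathbb{R}^n:\ \big\langle\boldsymbol\theta_1^*-\tfrac{\mathbf y}{\lambda_1},\boldsymbol\theta-\boldsymbol\theta_1^*\big\rangle\ge0,\ \big\langle\boldsymbol\theta-\tfrac{\mathbf y}{\lambda_2},\boldsymbol\theta_1^*-\boldsymbol\theta\big\rangle\ge0\Big\},$$ $u_j^+(\lambda_2)=\max_{\boldsymbol\theta\in\Omega}\langle\mathbf x_j,\boldsymbol\theta\rangle$ and $u_j^-(\lambda_2)=\max_{\boldsymbol\theta\in\Omega}\langle-\mathbf x_j,\boldsymbol\theta\rangle$. Let $\mathbf a=\frac{\mathbf y}{\lambda_1}-\boldsymbol\theta_1^*$, $\mathbf b=\frac{\mathbf y}{\lambda_2}-\boldsymbol\theta_1^*$, and when $\mathbf a\ne\mathbf 0$ let $\mathbf x_j^\perp=\mathbf x_j-\mathbf a\frac{\langle\mathbf x_j,\mathbf a\rangle}{\|\mathbf a\|_2^2}$ and $\mathbf y^\perp=\mathbf y-\mathbf a\frac{\langle\mathbf y,\mathbf a\rangle}{\|\mathbf a\|_2^2}$. Consider the formulas (P1) $u_j^+(\lambda_2)=\langle\mathbf x_j,\boldsymbol\theta_1^*\rangle+\frac{\frac1{\lambda_2}-\frac1{\lambda_1}}{2}\big[\|\mathbf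 x_j^\perp\|_2\|\mathbf y^\perp\|_2+\langle\mathbf x_j^\perp,\mathbf y^\perp\rangle\big]$; (N1) $u_j^-(\lambda_2)=-\langle\mathbf x_j,\boldsymbol\theta_1^*\rangle+\frac{\frac1{\lambda_2}-\frac1{\lambda_1}}{2}\big[\|\mathbf x_j^\perp\|_2\|\mathbf y^\perp\|_2-\langle\mathbf x_j^\perp,\mathbf y^\perp\rangle\big]$; (N2) $u_j^-(\lambda_2)=-\langle\mathbf x_j,\boldsymbol\theta_1^*\rangle+\frac12\big[\|\mathbf x_j\|_2\|\mathbf b\|_2-\langle\mathbf x_j,\mathbf b\rangle\big]$; (P2) $u_j^+(\lambda_2)=\langle\mathbf x_j,\boldsymbol\theta_1^*\rangle+\frac12\big[\|\mathbf x_j\|_2\|\mathbf b\|_2+\langle\mathbf x_j,\mathbf b\rangle\big]$. Then: 1) If $\mathbf a\ne\mathbf 0$ and $\frac{\langle\mathbf b,\mathbf a\rangle}{\|\mathbf b\|_2\|\mathbf a\|_2}>\frac{|\langle\mathbf x_j,\mathbf a\rangle|}{\|\mathbf x_j\|_2\|\mathbf a\|_2}$, then (P1) and (N1) hold. 2) If $\langle\mathbf x_j,\mathbf a\rangle>0$ and $\frac{\langle\mathbf b,\mathbf a\rangle}{\|\mathbf b\|_2\|\mathbf a\|_2}\le\frac{\langle\mathbf x_j,\mathbf a\rangle}{\|\mathbf x_j\|_2\|\mathbf a\|_2}$, then (P1) and (N2) hold. 3) If $\langle\mathbf x_j,\mathbf a\rangle<0$ and $\frac{\langle\mathbf b,\mathbf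 a\rangle}{\|\mathbf b\|_2\|\mathbf a\|_2}\le\frac{-\langle\mathbf x_j,\mathbf a\rangle}{\|\mathbf x_j\|_2\|\mathbf a\|_2}$, then (P2) and (N1) hold. 4) If $\mathbf a=\mathbf 0$, then (N2) and (P2) hold.
   Context: $X\in\mathbb{R}^{n\times p}$ is a matrix with columns $\mathbf x_j$ and $\mathbf y\in\mathbb{R}^n$ a vector. Let $F=\{\boldsymbol\theta\in\mathbb{R}^n:\|X^T\boldsymbol\theta\|_\infty\le 1\}$. For $\lambda>0$, the Lasso dual optimum $\boldsymbol\theta^*(\lambda)$ is the unique minimizer of $\frac12\|\boldsymbol\theta-\mathbf y/\lambda\|_2^2$ over $\boldsymbol\theta\in F$, i.e. the Euclidean projection of $\mathbf y/\lambda$ onto $F$. Write $\boldsymbol\theta_1^*=\boldsymbol\theta^*(\lambda_1)$. *)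

(* Defs.v *)
From HB Require Import structures.
From mathcomp Require Import all_boot all_order all_algebra.
Set Implicit Arguments. Unset Strict Implicit. Unset Printing Implicit Defensive.
Import Order.TTheory GRing.Theory Num.Theory.
Local Open Scope ring_scope.

Definition dot (R : rcfType) (n : nat) (u v : 'cV[R]_n) : R :=
  \sum_(i < n) u i 0 * v i 0.

Definition norm2 (R : rcfType) (n : nat) (u : 'cV[R]_n) : R :=
  Num.sqrt (dot u u).

Definition linf (R : rcfType) (p : nat) (v : 'cV[R]_p) : R :=
  \big[Num.max/0]_(i < p) `|v i 0|.

Definition dual_feasible (R : rcfType) (n p : nat) (X : 'M[R]_(n, p))
  (theta : 'cV[R]_n) : Prop :=
  linf (X^T *m theta) <= 1.

(* theta is the minimizer of 1/2 ||theta - y/lam||^2 over F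
   (i.e. theta = theta^*(lam), the projection of y/lam onto F) *)
Definition lasso_dual_opt (R : rcfType) (n p : nat) (X : 'M[R]_(n, p))
  (y : 'cV[R]_n) (lam : R) (theta : 'cV[R]_n) : Prop :=
  dual_feasible X theta /\
  forall theta', dual_feasible X theta' ->
    (norm2 (theta - lam^-1 *: y)) ^+ 2 / 2 <= (norm2 (theta' - lam^-1 *: y)) ^+ 2 / 2.

Definition Omega (R : rcfType) (n : nat) (y theta1 : 'cV[R]_n) (lam1 lam2 : R)
  (theta : 'cV[R]_n) : Prop :=
  0 <= dot (theta1 - lam1^-1 *: y) (theta - theta1) /\
  0 <= dot (theta - lam2^-1 *: y) (theta1 - theta).

Definition is_max_on (R : rcfType) (T : Type) (S : T -> Prop) (f : T -> R) (u : R) : Prop :=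
  (exists t, S t /\ f t = u) /\ (forall t, S t -> f t <= u).

(* Main.v *)
Require Import Defs.
From HB Require Import structures.
From mathcomp Require Import all_boot all_order all_algebra.
From mathcomp Require Import ring lra.
Import Order.TTheory GRing.Theory Num.Theory.
Local Open Scope ring_scope.
Set Implicit Arguments. Unset Strict Implicit. Unset Printing Implicit Defensive.

Section S.
Context {R : rcfType} {n : nat}.
Implicit Types (a u v w x b d : 'cV[R]_n).

Lemma dotC u v : dot u v = dot v u.
Proof. by apply: eq_bigr => i _; rewrite mulrC. Qed.
Lemma dotDl u v w : dot (u + v) w = dot u w + dot v w.
Proof. rewrite /dot -big_split; apply: eq_bigr => i _; by rewrite mxE mulrDl. Qed.
Lemma dotZl (k : R) u w : dot (k *: u) w = k * dot u w.
Proof. rewrite /dot mulr_sumr; apply: eq_bigr => i _; by rewrite mxE mulrA. Qed.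
Lemma dotNl u w : dot (- u) w = - dot u w.
Proof. by rewrite -scaleN1r dotZl mulN1r. Qed.
Lemma dotBl u v w : dot (u - v) w = dot u w - dot v w.
Proof. by rewrite dotDl dotNl. Qed.
Lemma dotDr u v w : dot w (u + v) = dot w u + dot w v.
Proof. by rewrite dotC dotDl !(dotC w). Qed.
Lemma dotZr (k : R) u w : dot w (k *: u) = k * dot w u.
Proof. by rewrite dotC dotZl dotC. Qed.
Lemma dotNr u w : dot w (- u) = - dot w u.
Proof. by rewrite dotC dotNl dotC. Qed.
Lemma dotBr u v w : dot w (u - v) = dot w u - dot w v.
Proof. by rewrite dotDr dotNr. Qed.
Lemma dot0l w : dot 0 w = 0.
Proof. by rewrite /dot big1 // => i _; rewrite mxE mul0r. Qed.
Lemma dot0r w : dot w 0 = 0.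
Proof. by rewrite dotC dot0l. Qed.
Lemma dot_ge0 u : 0 <= dot u u.
Proof. by apply: sumr_ge0 => i _; rewrite -expr2 sqr_ge0. Qed.
Lemma dot_eq0 u : dot u u = 0 -> u = 0.
Proof.
move=> /eqP; rewrite psumr_eq0 => [/allP H|i _]; last by rewrite -expr2 sqr_ge0.
apply/matrixP => i k; rewrite (ord1 k) mxE.
by have /= := H i (mem_index_enum i); rewrite mulf_eq0 orbb => /eqP.
Qed.
Lemma sq_norm u : norm2 u ^+ 2 = dot u u.
Proof. exact: sqr_sqrtr (dot_ge0 u). Qed.
Lemma norm_ge0 u : 0 <= norm2 u.
Proof. exact: sqrtr_ge0. Qed.
Lemma norm_eq0 u : norm2 u = 0 -> u = 0.
Proof. by move=> h; apply: dot_eq0; rewrite -sq_norm h expr0n. Qed.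
Lemma normN u : norm2 (- u) = norm2 u.
Proof. by rewrite /norm2 dotNl dotNr opprK. Qed.
Lemma normZ (k : R) u : norm2 (k *: u) = `|k| * norm2 u.
Proof. by rewrite /norm2 dotZl dotZr mulrA -expr2 sqrtrM ?sqr_ge0 // sqrtr_sqr. Qed.

Lemma CS u v : dot u v <= norm2 u * norm2 v.
Proof.
have hp := norm_ge0 u; have hq := norm_ge0 v.
have := dot_ge0 (norm2 v *: u - norm2 u *: v).
rewrite dotBl !dotBr !dotZl !dotZr -!sq_norm (dotC v u) => h.
have [pq0|pqpos] : norm2 u * norm2 v = 0 \/ 0 < norm2 u * norm2 v.
  by move: (mulr_ge0 hp hq); rewrite le0r => /orP[/eqP|]; [left|right].
  move: pq0 => /eqP; rewrite mulf_eq0 => /orP[]/eqP/norm_eq0 ->.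
  by rewrite dot0l mulr_ge0 ?norm_ge0.
  by rewrite dot0r mulr_ge0 ?norm_ge0.
nra.
Qed.

Lemma ball_ub x b d : dot d d <= dot b d -> dot x d <= (norm2 x * norm2 b + dot x b) / 2.
Proof.
move=> hd.
set e := d - 2^-1 *: b.
have he : dot e e <= (norm2 b / 2) ^+ 2.
  rewrite /e dotBl !dotBr !dotZl !dotZr (dotC d b) expr_div_n sq_norm; lra.
have hne : norm2 e <= norm2 b / 2.
  rewrite /norm2 -[X in _ <= X]ger0_norm ?divr_ge0 ?norm_ge0 //.
  by rewrite -sqrtr_sqr ler_wsqrtr.
have hd' : d = e + 2^-1 *: b by rewrite /e subrK.
rewrite hd' dotDr dotZr.
have := CS x e.
have := ler_wpM2l (norm_ge0 x) hne.
lra.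
Qed.

Lemma ball_att x b :
  let d := 2^-1 *: b + (norm2 b / (2 * norm2 x)) *: x in
  dot d d <= dot b d /\ dot x d = (norm2 x * norm2 b + dot x b) / 2.
Proof.
move=> d; rewrite /d !dotDl !dotDr !dotZl !dotZr (dotC x b) -(sq_norm x) -(sq_norm b).
have [nx0|nx0] := eqVneq (norm2 x) 0.
  have := sqr_ge0 (norm2 b).
  rewrite nx0 mulr0 invr0 mulr0 !mul0r; split; lra.
split; last by field.
have -> : norm2 b / (2 * norm2 x) * (norm2 b / (2 * norm2 x) * norm2 x ^+ 2)
   = norm2 b ^+2 / 4 by field.
lra.
Qed.

Definition perp a v : 'cV[R]_n := v - (dot v a / norm2 a ^+ 2) *: a.

Lemma dot_neq0 a : a != 0 -> dot a a != 0.
Proof. by apply: contra => /eqP/dot_eq0/eqP. Qed.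

Lemma perp_orth a v : a != 0 -> dot a (perp a v) = 0.
Proof.
move=> /dot_neq0 ha; rewrite /perp dotBr dotZr sq_norm (dotC a v) mulfVK //.
by rewrite subrr.
Qed.

Lemma perp_dot a v w : dot a w = 0 -> dot (perp a v) w = dot v w.
Proof. by move=> h; rewrite /perp dotBl dotZl h mulr0 subr0. Qed.

Definition Sab a b d := dot a d <= 0 /\ dot d d <= dot b d.

Lemma nocut_max a x b :
  dot a (2^-1 *: b + (norm2 b / (2 * norm2 x)) *: x) <= 0 ->
  (exists d, Sab a b d /\ dot x d = (norm2 x * norm2 b + dot x b) / 2) /\
  (forall d, Sab a b d -> dot x d <= (norm2 x * norm2 b + dot x b) / 2).
Proof.
move=> h; have [h1 h2] := ball_att x b; split.
  by exists (2^-1 *: b + (norm2 b / (2 * norm2 x)) *: x).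
by move=> d [_ hd]; apply: ball_ub.
Qed.

Lemma cut_max a x b : a != 0 ->
  0 < dot a (2^-1 *: b + (norm2 b / (2 * norm2 x)) *: x) ->
  (exists d, Sab a b d /\
     dot x d = (norm2 (perp a x) * norm2 (perp a b) + dot (perp a x) (perp a b)) / 2) /\
  (forall d, Sab a b d ->
     dot x d <= (norm2 (perp a x) * norm2 (perp a b) + dot (perp a x) (perp a b)) / 2).
Proof.
move=> ha hm; split.
  have [h1 h2] := ball_att (perp a x) (perp a b).
  set d0 := _ + _ in h1 h2.
  have hd0 : dot a d0 = 0 by rewrite /d0 dotDr !dotZr !perp_orth // !mulr0 addr0.
  exists d0; split; last by rewrite -h2 perp_dot.
  by split; [rewrite hd0 | rewrite -(perp_dot b hd0)].
move=> d [had hd].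
have [mb mx] := ball_att x b.
set m := _ + _ in mb mx hm.
have hxd := ball_ub x hd; rewrite -mx in hxd.
set al := dot a d in had; set mu := dot a m in hm.
set t := - al / (mu - al).
have hma : 0 < mu - al by lra.
have t0 : 0 <= t by rewrite /t divr_ge0 //; lra.
have t1 : t <= 1 by rewrite /t ler_pdivrMr //; lra.
set w := (1 - t) *: d + t *: m.
have haw : dot a w = 0.
  rewrite /w dotDr !dotZr -/al -/mu /t; field; lra.
have hdm := dot_ge0 (d - m).
rewrite dotBl !dotBr (dotC m d) in hdm.
have hw : dot w w <= dot b w.
  rewrite /w !dotDl !dotDr !dotZl !dotZr (dotC m d).
  have u0 : 0 <= 1 - t by rewrite subr_ge0.
  have := mulr_ge0 (mulr_ge0 t0 u0) hdm.
  have mb' : 0 <= dot b m - dot m m by rewrite subr_ge0.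
  have hd' : 0 <= dot b d - dot d d by rewrite subr_ge0.
  have := mulr_ge0 t0 mb'.
  have := mulr_ge0 u0 hd'.
  nra.
have hxw : dot x d <= dot x w.
  rewrite /w dotDr !dotZr.
  have hxd' : 0 <= dot x m - dot x d by rewrite subr_ge0.
  have := mulr_ge0 t0 hxd'.
  nra.
apply: le_trans hxw _.
rewrite -(perp_dot x haw); apply: ball_ub.
by rewrite (perp_dot b haw).
Qed.
End S.

Lemma transfer (R : rcfType) (n : nat) (y th1 f : 'cV[R]_n) (l1 l2 M : R) :
  let a := l1^-1 *: y - th1 in let b := l2^-1 *: y - th1 in
  (exists d, Sab a b d /\ dot f d = M) /\ (forall d, Sab a b d -> dot f d <= M) ->
  is_max_on (Omega y th1 l1 l2) (fun th => dot f th) (dot f th1 + M).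
Proof.
move=> a b [[d [hd hfd]] hub].
have key : forall th, Omega y th1 l1 l2 th <-> Sab a b (th - th1).
  move=> th; rewrite /Omega /Sab.
  have e1 : th1 - l1^-1 *: y = - a by rewrite /a opprB.
  have e2 : th - l2^-1 *: y = (th - th1) - b by rewrite /b opprB addrA subrK.
  have e3 : th1 - th = - (th - th1) by rewrite opprB.
  rewrite e1 e2 e3; move: (th - th1) => dd.
  rewrite dotNl dotNr (dotBl dd b dd) oppr_ge0 opprB subr_ge0.
  by split.
split.
  exists (th1 + d); split; last by rewrite dotDr hfd.
  by apply/key; rewrite addrC addKr.

move=> th /key h; have := hub _ h; rewrite dotBr; lra.
Qed.

Lemma linf_scale (R : rcfType) (p : nat) (v : 'cV[R]_p) (s : R) :
  0 <= s -> s <= 1 -> linf (s *: v) <= linf v.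
Proof.
move=> s0 s1; rewrite /linf; apply: (big_ind2 (fun u w => u <= w)) => //.
  by move=> x1 x2 y1 y2 h1 h2; apply: le_max2.
by move=> i _; rewrite mxE normrM ger0_norm // ler_piMl.
Qed.

Lemma proj_fact (R : rcfType) (n p : nat) (X : 'M[R]_(n, p)) (y th : 'cV[R]_n) (lam : R) :
  lasso_dual_opt X y lam th -> 0 <= dot (lam^-1 *: y - th) th.
Proof.
move=> [hf hopt].
move Ea : (lam^-1 *: y - th) => a; set g := dot a th; set T := dot th th.
rewrite leNgt; apply/negP => hg.
have T0 : 0 <= T := dot_ge0 th.
have Tg : 0 < T - g by lra.
set r := - g / (T - g).
have r0 : 0 < r by rewrite /r divr_gt0 //; lra.
have r1 : r <= 1 by rewrite /r ler_pdivrMr //; lra.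
have := hopt ((1 - r) *: th).
have hfe : dual_feasible X ((1 - r) *: th).
  rewrite /dual_feasible -scalemxAr; apply: le_trans hf; apply: linf_scale; lra.
move=> /(_ hfe).
have e1 : th - lam^-1 *: y = - a by rewrite -Ea opprB.
have e2 : (1 - r) *: th - lam^-1 *: y = - (a + r *: th).
  by rewrite -Ea; apply/matrixP => i k; rewrite !mxE; ring.
rewrite e1 e2 !sq_norm !dotNl !dotNr !opprK !dotDl !dotDr !dotZl !dotZr (dotC th a) -/g -/T.
have hr : r * (T - g) = - g by rewrite /r divfK // gt_eqF.
have h1 : 0 < r * - g by rewrite mulr_gt0 //; lra.
have h2 : 0 < r * (r * - g) := mulr_gt0 r0 h1.
nra.
Qed.

Lemma max_eq (R : rcfType) (T : Type) (S : T -> Prop) (f : T -> R) (u v : R) :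
  is_max_on S f u -> u = v -> is_max_on S f v.
Proof. by move=> h <-. Qed.

Lemma key_id (R : rcfType) (dab z nb na nx : R) : nb != 0 -> na != 0 -> nx != 0 ->
  2^-1 * dab + nb / (2 * nx) * z = nb * na / 2 * (dab / (nb * na) + z / (nx * na)).
Proof. by move=> h1 h2 h3; field; rewrite ?h1 ?h2 ?h3. Qed.

Lemma perp_lin (R : rcfType) (n : nat) (a y : 'cV[R]_n) (c : R) : a != 0 ->
  perp a (a + c *: y) = c *: perp a y.
Proof.
move=> /dot_neq0 ha; rewrite /perp sq_norm dotDl dotZl.
apply/matrixP => i k; rewrite !mxE; field. exact: ha.
Qed.

Lemma perpN (R : rcfType) (n : nat) (a x : 'cV[R]_n) : perp a (- x) = - perp a x.
Proof. rewrite /perp dotNl; apply/matrixP => i k; rewrite !mxE; ring. Qed.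

Theorem theorem3 (R : rcfType) (n p : nat) (X : 'M[R]_(n, p)) (y : 'cV[R]_n)
  (lam1 lam2 : R) (theta1 : 'cV[R]_n) (j : 'I_p) :
  y != 0 ->
  lam1 <= linf (X^T *m y) -> lam2 < lam1 -> 0 < lam2 ->
  col j X != 0 ->
  lasso_dual_opt X y lam1 theta1 ->
  let xj := col j X in
  let a := lam1^-1 *: y - theta1 in
  let b := lam2^-1 *: y - theta1 in
  let xjp := xj - (dot xj a / (norm2 a) ^+ 2) *: a in
  let yp := y - (dot y a / (norm2 a) ^+ 2) *: a in
  let Om := Omega y theta1 lam1 lam2 in
  let uplus := fun u => is_max_on Om (fun th => dot xj th) u in
  let uminus := fun u => is_max_on Om (fun th => dot (- xj) th) u in
  let P1 := uplus (dot xj theta1 + (lam2^-1 - lam1^-1) / 2 *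
                     (norm2 xjp * norm2 yp + dot xjp yp)) in
  let N1 := uminus (- dot xj theta1 + (lam2^-1 - lam1^-1) / 2 *
                     (norm2 xjp * norm2 yp - dot xjp yp)) in
  let N2 := uminus (- dot xj theta1 + 1 / 2 * (norm2 xj * norm2 b - dot xj b)) in
  let P2 := uplus (dot xj theta1 + 1 / 2 * (norm2 xj * norm2 b + dot xj b)) in
  [/\ (a != 0 ->
        dot b a / (norm2 b * norm2 a) > `|dot xj a| / (norm2 xj * norm2 a) ->
        P1 /\ N1),
      (0 < dot xj a ->
        dot b a / (norm2 b * norm2 a) <= dot xj a / (norm2 xj * norm2 a) ->
        P1 /\ N2),
      (dot xj a < 0 ->
        dot b a / (norm2 b * norm2 a) <= - dot xj a / (norm2 xj * norm2 a) ->
        P2 /\ N1)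
    & (a = 0 -> N2 /\ P2)].
Proof.
move=> hy hl1 hl12 hl2 hx hopt.
have hF := proj_fact hopt.
cbv zeta.
set c := lam2^-1 - lam1^-1.
set a := lam1^-1 *: y - theta1 in hF *.
set b := lam2^-1 *: y - theta1.
set xj := col j X.
have l1pos : 0 < lam1 by lra.
have cpos : 0 < c by rewrite /c subr_gt0 ltf_pV2 ?posrE.
have hb : b = a + c *: y.
  by rewrite /b /a /c; apply/matrixP => i k; rewrite !mxE; ring.
have hy1 : y = lam1 *: (a + theta1).
  rewrite /a; apply/matrixP => i k; rewrite !mxE; field; exact: lt0r_neq0.
have hay : dot a y = lam1 * (dot a a + dot a theta1).
  by rewrite {1}hy1 dotZr dotDr.
have hab : a != 0 -> 0 < dot a b.
  move=> ha; have haa : 0 < dot a a by rewrite lt0r dot_neq0 // dot_ge0.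
  rewrite hb dotDr dotZr hay.
  have := mulr_gt0 cpos l1pos; nra.
have hpb : a != 0 -> perp a b = c *: perp a y by move=> ha; rewrite hb perp_lin.
have nxpos : 0 < norm2 xj.
  rewrite lt0r norm_ge0 andbT; apply/eqP => /norm_eq0 h; by move: hx; rewrite -/xj h eqxx.
set kk := norm2 b / (2 * norm2 xj).
have kk0 : 0 <= kk by rewrite /kk divr_ge0 ?norm_ge0 // mulr_ge0 ?norm_ge0.
have cutP : forall x, a != 0 -> norm2 x = norm2 xj ->
    0 < dot a (2^-1 *: b + kk *: x) ->
    is_max_on (Omega y theta1 lam1 lam2) (fun th => dot x th)
      (dot x theta1 + c / 2 * (norm2 (perp a x) * norm2 (perp a y) + dot (perp a x) (perp a y))).
  move=> x ha hnx hm.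
  rewrite /kk -hnx in hm.
  apply: max_eq; first exact: (transfer (cut_max ha hm)).
  rewrite hpb // normZ gtr0_norm // dotZr; ring.
have nocutP : forall x, norm2 x = norm2 xj ->
    dot a (2^-1 *: b + kk *: x) <= 0 ->
    is_max_on (Omega y theta1 lam1 lam2) (fun th => dot x th)
      (dot x theta1 + 1 / 2 * (norm2 x * norm2 b + dot x b)).
  move=> x hnx hm.
  rewrite /kk -hnx in hm.
  apply: max_eq; first exact: (transfer (nocut_max hm)).
  ring.
have hdm : forall x, dot a (2^-1 *: b + kk *: x) = 2^-1 * dot a b + kk * dot a x.
  by move=> x; rewrite dotDr !dotZr.
have N1conv : forall u, is_max_on (Omega y theta1 lam1 lam2) (fun th => dot (- xj) th)
      (dot (- xj) theta1 + c / 2 * (norm2 (perp a (- xj)) * norm2 (perp a y)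
         + dot (perp a (- xj)) (perp a y))) ->
      u = - dot xj theta1 + c / 2 * (norm2 (perp a xj) * norm2 (perp a y) - dot (perp a xj) (perp a y)) ->
      is_max_on (Omega y theta1 lam1 lam2) (fun th => dot (- xj) th) u.
  move=> u hh ->; apply: (max_eq hh).
  by rewrite perpN normN !dotNl; ring.
have N2conv : forall u, is_max_on (Omega y theta1 lam1 lam2) (fun th => dot (- xj) th)
      (dot (- xj) theta1 + 1 / 2 * (norm2 (- xj) * norm2 b + dot (- xj) b)) ->
      u = - dot xj theta1 + 1 / 2 * (norm2 xj * norm2 b - dot xj b) ->
      is_max_on (Omega y theta1 lam1 lam2) (fun th => dot (- xj) th) u.
  move=> u hh ->; apply: (max_eq hh).
  by rewrite normN !dotNl; ring.
have naP : a != 0 -> 0 < norm2 a.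
  move=> ha; rewrite lt0r norm_ge0 andbT; apply/eqP => /norm_eq0 h0.
  by rewrite h0 eqxx in ha.
have key1 : a != 0 -> norm2 b != 0 -> forall z, 2^-1 * dot a b + kk * z =
    norm2 b * norm2 a / 2 * (dot b a / (norm2 b * norm2 a) + z / (norm2 xj * norm2 a)).
  move=> ha hnb z; rewrite /kk (dotC b a) (@key_id _ _ _ _ (norm2 a)) //.
    exact: lt0r_neq0 (naP ha).
  exact: lt0r_neq0.
have hnbP : a != 0 -> norm2 b != 0 -> 0 < norm2 b * norm2 a / 2.
  move=> ha hnb; rewrite divr_gt0 // mulr_gt0 ?naP //.
  by rewrite lt0r hnb norm_ge0.
split.
- move=> ha H.
  have nbP : norm2 b != 0.
    apply/eqP => nb0; move: H; rewrite nb0 mul0r invr0 mulr0 ltNge divr_ge0 //.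
    by rewrite mulr_ge0 ?norm_ge0.
  set t := dot xj a / (norm2 xj * norm2 a).
  have ht : `|dot xj a| / (norm2 xj * norm2 a) = `|t|.
    by rewrite /t normrM normfV (gtr0_norm (mulr_gt0 nxpos (naP ha))).
  rewrite ht in H.
  have := ler_norm t; have := ler_norm (- t); rewrite normrN => h1 h2.
  split.
    apply: cutP => //; rewrite hdm (key1 ha nbP) pmulr_rgt0 ?hnbP // (dotC a xj) -/t.
    lra.
  apply: N1conv; last by [].
  apply: cutP; rewrite ?normN // hdm dotNr (key1 ha nbP) pmulr_rgt0 ?hnbP //.
  rewrite (dotC a xj) mulNr -/t; lra.
- move=> hxa H.
  have ha : a != 0 by apply/eqP => h0; move: hxa; rewrite h0 dot0r ltxx.
  split.
    apply: cutP => //; rewrite hdm (dotC a xj).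
    have := hab ha; have := mulr_ge0 kk0 (ltW hxa); lra.
  apply: N2conv; last by [].
  apply: nocutP; rewrite ?normN // hdm dotNr.
  have [nb0|nbP] := eqVneq (norm2 b) 0.
    rewrite /kk nb0 mul0r (norm_eq0 nb0) dot0r; lra.
  rewrite (key1 ha nbP) pmulr_rle0 ?hnbP // (dotC a xj) mulNr; lra.
- move=> hxa H.
  have ha : a != 0 by apply/eqP => h0; move: hxa; rewrite h0 dot0r ltxx.
  split.
    apply: nocutP => //; rewrite hdm.
    have [nb0|nbP] := eqVneq (norm2 b) 0.
      rewrite /kk nb0 mul0r (norm_eq0 nb0) dot0r; lra.
    rewrite (key1 ha nbP) pmulr_rle0 ?hnbP // (dotC a xj); move: H; rewrite mulNr; lra.
  apply: N1conv; last by [].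
  apply: cutP; rewrite ?normN // hdm dotNr (dotC a xj).
  have : 0 <= kk * - dot xj a by rewrite mulr_ge0 // oppr_ge0 ltW.
  have := hab ha; lra.
- move=> ha0; split.
    apply: N2conv; last by [].
    by apply: nocutP; rewrite ?normN // ha0 dot0l.
  by apply: nocutP; rewrite // ha0 dot0l.
Qed.
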